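(* Let $p_1,\dots,p_\theta\ge0$ with $\sum_i p_i=1$. Then \[ \mathbb E\Big[\prod_{\gamma\in\mathcal C(\omega)}\Big(\sum_{i=1}^\theta p_i^{|\gamma|}\Big)\Big]=\sum_{\lambda\vdash n}\binom{n}{\lambda}\Big(\sum_{\kappa\in K(\lambda)}\prod_{i=1}^\theta p_i^{\kappa_i}\Big)\sum_{\sigma\in\mathcal T_\lambda}f(\sigma). \]
   Context: Fix $\theta\in\{2,3,\dots\}$, $\beta>0$. Let $V=\{1,\dots,n\}$, $E$ the set of unordered pairs of distinct elements of $V$. Under $\mathbb P$ (expectation $\mathbb E$), let $\omega=(\omega_{xy}:xy\in E)$ be independent rate-1 Poisson point processes on $[0,\beta/n]$, and $\sigma(\omega)\in\mathcal S_n$ the time-ordered composition of the transpositions $(x,y)$ over all points $t\in\omega_{xy}$. $\mathcal C(\omega)$ is the set of cycles of $\sigma(\omega)$ (including fixed points), $|\gamma|$ the size of cycle $\gamma$, and $f(\sigma)=\mathbb P(\sigma(\omega)=\sigma)$. A composition of $n$ is a vector $\kappa=(\kappa_1,\dots,\kappa_\theta)$ of nonnegative integers with $\sum\kappa_j=n$; it is a partition, written $\lambda\vdash n$, if moreover $\lambda_1\ge\dots\ge\lambda_\theta$ (so partitions have exactly $\theta$ entries, some possibly $0$). $K(\lambda)$ is the set of compositions obtained by reordering the entries of $\lambda$. $\binom{n}{\lambda}=n!/(\lambda_1!\cdots\lambda_\theta!)$. The Young subgroup $\mathcal T_\lambda\subseteq\mathcal S_n$ consists of permutations fixing each of the sets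 $\{1,\dots,\lambda_1\}$, $\{\lambda_1+1,\dots,\lambda_1+\lambda_2\}$, etc. *)

(* Defs.v *)
From HB Require Import structures.
From mathcomp Require Import all_boot all_order all_algebra all_fingroup.
From mathcomp Require Import all_classical all_reals all_analysis.
Set Implicit Arguments. Unset Strict Implicit. Unset Printing Implicit Defensive.
Import Order.TTheory GRing.Theory Num.Theory.
Import numFieldNormedType.Exports.
Local Open Scope ring_scope.

(* Edge set E of the complete graph on V = 'I_n: unordered pairs {x,y},
   represented by ordered pairs (x,y) with x < y. *)
Definition edge_set (n : nat) : {set 'I_n * 'I_n} := [set e : 'I_n * 'I_n | (e.1 < e.2)%N].

(* Time-ordered composition of the transpositions of an edge sequence
   e_0, e_1, ..., e_{k-1} (e_0 earliest).  In MathComp (s * t) x = t (s x),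
   so the product applies e_0 first. *)
Definition walk_perm (n k : nat) (e : {ffun 'I_k -> 'I_n * 'I_n}) : {perm 'I_n} :=
  (\prod_(i < k) tperm (e i).1 (e i).2)%g.

Definition walk_count (n k : nat) (s : {perm 'I_n}) : nat :=
  #|[set e : {ffun 'I_k -> 'I_n * 'I_n} |
       [forall i, e i \in edge_set n] && (walk_perm e == s)]|.

(* f(s) = P(sigma(omega) = s) for independent rate-1 Poisson processes on
   the edges over the time interval [0, beta/n].  The superposition has
   N ~ Poisson(|E| beta/n) points, which given N = k carry iid uniform edges
   (and a.s. distinct iid uniform times), so
   f(s) = sum_k e^{-|E| t} (|E| t)^k / k! * walk_count k s / |E|^k,  t = beta/n. *)
Definition fperm (R : realType) (n : nat) (beta : R) (s : {perm 'I_n}) : R :=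
  let t := beta / n%:R in
  let m := (#|edge_set n|)%:R in
  limn (series (fun k : nat =>
     expR (- (m * t)) * (m * t) ^+ k / (k`!)%:R
        * ((walk_count k s)%:R / m ^+ k))).

(* E[ F(sigma(omega)) ] for F a function on permutations: sigma(omega)
   takes finitely many values, so the expectation is the finite sum. *)
Definition Eperm (R : realType) (n : nat) (beta : R) (F : {perm 'I_n} -> R) : R :=
  \sum_(s : {perm 'I_n}) fperm beta s * F s.

Definition is_composition (theta n : nat) (k : {ffun 'I_theta -> 'I_n.+1}) : bool :=
  (\sum_(i < theta) (k i : nat) == n)%N.

(* Partitions lambda |- n with exactly theta (possibly zero) entries. *)
Definition is_partition (theta n : nat) (l : {ffun 'I_theta -> 'I_n.+1}) : bool :=
  is_composition l && [forall i : 'I_theta, forall j : 'I_theta,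
                         ((i <= j)%N ==> (l j <= l i)%N)].

Definition Kset (theta n : nat) (l : {ffun 'I_theta -> 'I_n.+1})
  : {set {ffun 'I_theta -> 'I_n.+1}} :=
  [set k : {ffun 'I_theta -> 'I_n.+1} | [exists s : {perm 'I_theta}, [forall i, k i == l (s i)]]].

Definition multinom (R : realType) (theta n : nat) (l : {ffun 'I_theta -> 'I_n.+1}) : R :=
  (n`!)%:R / (\prod_(i < theta) ((l i : nat)`!))%:R.

Definition young_block (theta n : nat) (l : {ffun 'I_theta -> 'I_n.+1}) (j : 'I_theta)
  : {set 'I_n} :=
  [set x : 'I_n | (\sum_(i < theta | (i < j)%N) (l i : nat) <= x)%N
                  && (x < \sum_(i < theta | (i <= j)%N) (l i : nat))%N].

Definition young (theta n : nat) (l : {ffun 'I_theta -> 'I_n.+1}) : {set {perm 'I_n}} :=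
  [set s : {perm 'I_n} | [forall j : 'I_theta, forall x : 'I_n,
                           (x \in young_block l j) ==> (s x \in young_block l j)]].

(* Main.v *)
Require Import Defs.
From HB Require Import structures.
From mathcomp Require Import all_boot all_order all_algebra all_fingroup.
From mathcomp Require Import all_classical all_reals all_analysis.
From mathcomp Require Import zify.
Import Order.TTheory GRing.Theory Num.Theory.
Set Implicit Arguments. Unset Strict Implicit. Unset Printing Implicit Defensive.
Local Open Scope ring_scope.
Definition pk (th : nat) (j0 : 'I_th) n (c : {ffun 'I_n -> 'I_th}) (g : {set 'I_n}) :=
  if [pick y in g] is Some y then c y else j0.

Lemma inv_orbit n th (j0 : 'I_th) (s : {perm 'I_n}) (c : {ffun 'I_n -> 'I_th}) :
  [forall x, c (s x) == c x] = [forall x, pk j0 c (porbit s x) == c x].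
Proof.
apply/forallP/forallP => H x.
- have Hk k : c ((s ^+ k)%g x) = c x.
    elim: k => [|k IH]; first by rewrite expg0 perm1.
    by rewrite expgSr permM (eqP (H _)).
  rewrite /pk; case: pickP => [y /porbitP [k ->]|/(_ x)]; last by rewrite porbit_id.
  by rewrite Hk.
- have e := porbit_perm s 1 x; rewrite expg1 in e.
  by rewrite -(eqP (H (s x))) -(eqP (H x)) e.
Qed.

Lemma orbit_expand (R : realType) n th (j0 : 'I_th) (q : 'I_th -> R)
  (s : {perm 'I_n}) :
  \prod_(g in porbits s) \sum_(i < th) q i ^+ #|g| =
  \sum_(c : {ffun 'I_n -> 'I_th} | [forall x, c (s x) == c x])
     \prod_x q (c x).
Proof.
rewrite (big_distr_big j0) /=.
pose h := fun c : {ffun 'I_n -> 'I_th} =>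
  [ffun g : {set 'I_n} => if g \in porbits s then pk j0 c g else j0].
pose h' := fun f : {ffun {set 'I_n} -> 'I_th} => [ffun x => f (porbit s x)].
rewrite (reindex_onto h h') /=; last first.
  move=> f /pffun_onP [supp _]; apply/ffunP => g; rewrite !ffunE.
  case: ifP => gP.
    move/imsetP: gP => [y _ ->]; rewrite /pk; case: pickP => [z zin|/(_ y)]; 
      last by rewrite porbit_id.
    rewrite ffunE; congr (f _).
    by apply/eqP; rewrite eq_porbit_mem.
  apply/eqP; apply: contraFT gP => ne.
  move: ne; rewrite eq_sym => ne.
  have := fintype.subsetP supp g; rewrite !inE; apply; exact: ne.
apply: eq_big => c.
  have -> : h c \in pffun_on j0 (fun g => g \in porbits s) predT.
    apply/pffun_onP; split=> //.
    apply/fintype.subsetP => g; rewrite inE /h ffunE; case: ifP => //.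
    by rewrite eqxx.
  rewrite (inv_orbit j0) /=; apply/eqP/forallP => [/ffunP H x|H].
    by have := H x; rewrite !ffunE imset_f // => ->.
  by apply/ffunP => x; rewrite !ffunE imset_f // (eqP (H x)).
move=> cinv.
rewrite (eq_bigl (fun x => x \in [set: 'I_n])); last by move=> x; rewrite inE.
rewrite (partition_big_imset (porbit s)).
have -> : [set porbit s x | x in [set: 'I_n]] = porbits s.
  by apply/setP => g; apply/imsetP/imsetP => [[x _ ->]|[x _ ->]]; exists x.
apply: eq_bigr => g /imsetP [y _ ->].
rewrite (eq_bigl (fun x => x \in porbit s y)); last first.
  by move=> x; rewrite inE eq_porbit_mem.
rewrite -prodr_const; apply: eq_bigr => x xin.
have e : porbit s x = porbit s y by apply/eqP; rewrite eq_porbit_mem.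
move/andP: cinv => [_ /eqP/ffunP H].
by have := H x; rewrite ffunE e => ->.
Qed.
Definition Phi n k (pi : {perm 'I_n}) (e : {ffun 'I_k -> 'I_n * 'I_n}) :
  {ffun 'I_k -> 'I_n * 'I_n} :=
  [ffun i => if (pi (e i).1 < pi (e i).2)%N then (pi (e i).1, pi (e i).2)
             else (pi (e i).2, pi (e i).1)].

Lemma walk_permJ n k (pi : {perm 'I_n}) (e : {ffun 'I_k -> 'I_n * 'I_n}) :
  walk_perm (Phi pi e) = (walk_perm e ^ pi)%g.
Proof.
rewrite /walk_perm (big_morph (fun x => (x ^ pi)%g) (fun x y => conjMg x y pi)
  (conj1g pi)).
apply: eq_bigr => i _; rewrite ffunE tpermJ; case: ifP => _ //.
by rewrite tpermC.
Qed.

Lemma walk_count_le n k (pi : {perm 'I_n}) (s : {perm 'I_n}) :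
  (walk_count k s <= walk_count k (s ^ pi)%g)%N.
Proof.
rewrite /walk_count.
set A := [set e : {ffun 'I_k -> 'I_n * 'I_n} | _].
set B := [set e : {ffun 'I_k -> 'I_n * 'I_n} | _].
have inj : {in A &, injective (Phi pi)}.
  have K : {in A, cancel (Phi pi) (Phi pi^-1)}.
    move=> e; rewrite inE => /andP [/forallP H _].
    apply/ffunP => i; rewrite !ffunE.
    have := H i; rewrite inE.
    case: (e i) => a b /= ab.
    have [h|h] := ltnP (pi a) (pi b); rewrite /= !permK ?ab //.
    by rewrite ltnNge (ltnW ab).
  by move=> x y xA yA exy; rewrite -(K x xA) -(K y yA) exy.
rewrite -(card_in_imset inj); apply: subset_leq_card.
apply/fintype.subsetP => _ /imsetP [e eA ->].
move: eA; rewrite !inE => /andP [/forallP H /eqP ws].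
apply/andP; split; last by rewrite walk_permJ ws.
apply/forallP => i; rewrite !inE ffunE.
have := H i; rewrite inE; case: (e i) => a b /= ab.
case: ifP => //= /negbT; rewrite -leqNgt leq_eqVlt => /orP [/eqP E|//].
by move: ab; rewrite (perm_inj (val_inj E)) ltnn.
Qed.

Lemma walk_countJ n k (pi : {perm 'I_n}) (s : {perm 'I_n}) :
  walk_count k (s ^ pi)%g = walk_count k s.
Proof.
apply/eqP; rewrite eqn_leq walk_count_le andbT.
have := walk_count_le k pi^-1 (s ^ pi)%g.
by rewrite -conjgM mulgV conjg1.
Qed.

Lemma fpermJ (R : realType) n (beta : R) (s pi : {perm 'I_n}) :
  fperm beta (s ^ pi)%g = fperm beta s.
Proof.
rewrite /fperm; congr (limn (series _)); apply: funext => k.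
by rewrite walk_countJ.
Qed.
Definition cnt n th (c : {ffun 'I_n -> 'I_th}) (i : 'I_th) : nat :=
  #|[set x | c x == i]|.

Definition invc n th (c : {ffun 'I_n -> 'I_th}) (s : {perm 'I_n}) : bool :=
  [forall x, c (s x) == c x].

Lemma same_cnt_perm n th (c1 c2 : {ffun 'I_n -> 'I_th}) :
  (forall i, cnt c1 i = cnt c2 i) ->
  exists pi : {perm 'I_n}, forall x, c2 (pi x) = c1 x.
Proof.
move=> H.
pose F (c : {ffun 'I_n -> 'I_th}) i := enum [set x | c x == i].
pose f x := nth x (F c2 (c1 x)) (index x (F c1 (c1 x))).
have inF1 x : x \in F c1 (c1 x) by rewrite mem_enum inE.
have lt1 x : (index x (F c1 (c1 x)) < size (F c1 (c1 x)))%N by rewrite index_mem.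
have sz x : size (F c1 (c1 x)) = size (F c2 (c1 x)).
  by rewrite -!cardE; apply: H.
have fc x : c2 (f x) = c1 x.
  have : f x \in F c2 (c1 x) by rewrite mem_nth // -sz.
  by rewrite mem_enum inE => /eqP.
have finj : injective f.
  move=> x y exy.
  have cxy : c1 x = c1 y by rewrite -fc exy fc.
  have xin : x \in F c1 (c1 y) by rewrite -cxy.
  have i1 : (index x (F c1 (c1 y)) < size (F c2 (c1 y)))%N.
    by rewrite -sz index_mem.
  have i2 : (index y (F c1 (c1 y)) < size (F c2 (c1 y)))%N.
    by rewrite -sz index_mem.
  move: exy; rewrite /f cxy => /eqP.
  rewrite (set_nth_default y) // nth_uniq ?enum_uniq // => /eqP ei.
  by rewrite -(nth_index y (inF1 y)) -ei nth_index.
by exists (perm finj) => x; rewrite permE fc.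
Qed.

Lemma Inv_transfer (R : realType) n th (F : {perm 'I_n} -> R)
  (c1 c2 : {ffun 'I_n -> 'I_th}) (pi : {perm 'I_n}) :
  (forall s t, F (s ^ t)%g = F s) ->
  (forall x, c2 (pi x) = c1 x) ->
  \sum_(s | invc c1 s) F s = \sum_(s | invc c2 s) F s.
Proof.
move=> FJ E.
rewrite (reindex_inj (conjg_inj (pi^-1)%g)) /=.
apply: eq_big => t; last by move=> _; rewrite FJ.
have ev x : (t ^ (pi^-1)%g)%g x = (pi^-1)%g (t (pi x)).
  by rewrite /conjg !permM invgK.
apply/forallP/forallP => Hx x.
  have := Hx ((pi^-1)%g x); rewrite ev permKV -!E !permKV.
  by [].
by rewrite ev -!E permKV (Hx (pi x)).
Qed.
Lemma card_interval n a b : (a <= b)%N -> (b <= n)%N ->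
  #|[set x : 'I_n | (a <= x)%N && (x < b)%N]| = (b - a)%N.
Proof.
move=> ab bn.
rewrite -sum1_card (eq_bigl (fun x : 'I_n => (a <= x)%N && (x < b)%N));
  last by move=> x; rewrite inE.
rewrite -(big_mkord (fun x => (a <= x)%N && (x < b)%N) (fun=> 1%N)).
rewrite (big_cat_nat (leq0n a) (leq_trans ab bn)) /=.
rewrite (big_cat_nat ab bn) /=.
rewrite big_nat_cond big1; last by move=> i; lia.
rewrite add0n [X in (_ + X)%N]big_nat_cond [X in (_ + X)%N]big1;
  last by move=> i; lia.
rewrite addn0 -[RHS]muln1 -sum_nat_const_nat big_nat_cond [in RHS]big_nat_cond.
by apply: eq_bigl => i; rewrite andbb andbT.
Qed.

Definition Sb th n (l : {ffun 'I_th -> 'I_n.+1}) (j : nat) : nat :=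
  (\sum_(i < th | (i < j)%N) (l i : nat))%N.

Lemma Sb_mono th n (l : {ffun 'I_th -> 'I_n.+1}) j k : (j <= k)%N ->
  (Sb l j <= Sb l k)%N.
Proof.
move=> jk; rewrite /Sb [X in (X <= _)%N]big_mkcond [X in (_ <= X)%N]big_mkcond.
apply: leq_sum => i _; case: ifP => // ij.
by rewrite (leq_trans ij jk).
Qed.

Lemma SbS th n (l : {ffun 'I_th -> 'I_n.+1}) (j : 'I_th) :
  Sb l j.+1 = (Sb l j + l j)%N.
Proof.
rewrite /Sb (bigD1 j) //= addnC; congr (_ + _)%N.
by apply: eq_bigl => i; rewrite ltnS ltn_neqAle andbC.
Qed.

Lemma Sb_th th n (l : {ffun 'I_th -> 'I_n.+1}) :
  is_composition l -> Sb l th = n.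
Proof.
by move=> /eqP E; rewrite -[RHS]E /Sb; apply: eq_bigl => i; rewrite ltn_ord.
Qed.

Lemma blockE th n (l : {ffun 'I_th -> 'I_n.+1}) j x :
  (x \in young_block l j) = (Sb l j <= x < Sb l j.+1)%N.
Proof.
rewrite inE; congr (_ && (x < _)%N).
Qed.

Lemma block_exists th n (l : {ffun 'I_th -> 'I_n.+1}) (x : 'I_n) :
  is_composition l -> exists j : 'I_th, x \in young_block l j.
Proof.
move=> lc.
have Sth := Sb_th lc.
have th0 : (0 < th)%N.
  case: th l lc Sth => // l _; rewrite /Sb big_ord0 => e.
  by move: (ltn_ord x); rewrite -[n in (_ < n)%N]e.
pose P m := (m < th)%N && (Sb l m <= x)%N.
have exP : exists m, P m.
  by exists 0%N; rewrite /P th0 /Sb big1.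
have ubP : forall m, P m -> (m <= th)%N by move=> m /andP [/ltnW].
case: (ex_maxnP exP ubP) => m /andP [mth Sm] mx.
exists (Ordinal mth); rewrite blockE Sm /=.
case: (ltnP m.+1 th) => h.
  by rewrite ltnNge; apply/negP => S1; have := mx m.+1; rewrite /P h S1 ltnn => /(_ isT).
have -> : m.+1 = th by apply/eqP; rewrite eqn_leq h mth.
by rewrite Sth ltn_ord.
Qed.

Lemma block_unique th n (l : {ffun 'I_th -> 'I_n.+1}) (x : 'I_n) j k :
  x \in young_block l j -> x \in young_block l k -> j = k.
Proof.
rewrite !blockE => /andP [a1 b1] /andP [a2 b2].
case: (ltngtP j k) => h; last exact: val_inj.
- have := Sb_mono l h; lia.
- have := Sb_mono l h; lia.
Qed.

Definition dcol th n (j0 : 'I_th) (l : {ffun 'I_th -> 'I_n.+1}) :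
  {ffun 'I_n -> 'I_th} :=
  [ffun x => odflt j0 [pick j | x \in young_block l j]].

Lemma dcolP th n (j0 : 'I_th) (l : {ffun 'I_th -> 'I_n.+1}) x j :
  is_composition l -> (x \in young_block l j) = (dcol j0 l x == j).
Proof.
move=> lc; rewrite ffunE; case: pickP => [j' Hj'|none] /=.
  by apply/idP/eqP => [H|<-]; [apply: block_unique H| ].
by have [j'' Hj''] := block_exists x lc; have := none j''; rewrite Hj''.
Qed.

Lemma young_inv th n (j0 : 'I_th) (l : {ffun 'I_th -> 'I_n.+1}) s :
  is_composition l -> (s \in young l) = invc (dcol j0 l) s.
Proof.
move=> lc; rewrite inE; apply/forallP/forallP.
  move=> H x; have /forallP/(_ x) := H (dcol j0 l x).
  by rewrite !(dcolP j0) // eqxx.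
move=> H j; apply/forallP => x; apply/implyP; rewrite !(dcolP j0) //.
by move=> /eqP <-.
Qed.

Lemma cnt_dcol th n (j0 : 'I_th) (l : {ffun 'I_th -> 'I_n.+1}) j :
  is_composition l -> cnt (dcol j0 l) j = l j.
Proof.
move=> lc; rewrite /cnt.
have -> : [set x | dcol j0 l x == j] = [set x : 'I_n | (Sb l j <= x)%N && (x < Sb l j.+1)%N].
  by apply/setP => x; rewrite !inE -(dcolP j0) // blockE.
rewrite card_interval ?SbS ?addKn ?leq_addr //.
rewrite -SbS; apply: leq_trans (Sb_mono l (ltn_ord j)) _.
by rewrite (Sb_th lc).
Qed.
Definition Phis th n (k : {ffun 'I_th -> 'I_n.+1}) (s : {perm 'I_th}) : nat :=
  (\sum_(i < th) i * k (s i))%N.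

Definition sigst th n (k : {ffun 'I_th -> 'I_n.+1}) : {perm 'I_th} :=
  arg_min 1%g (fun _ => true) (Phis k).

Definition sortf th n (k : {ffun 'I_th -> 'I_n.+1}) : {ffun 'I_th -> 'I_n.+1} :=
  [ffun i => k (sigst k i)].

Definition nonincr th n (l : {ffun 'I_th -> 'I_n.+1}) : bool :=
  [forall i : 'I_th, forall j : 'I_th, ((i <= j)%N ==> (l j <= l i)%N)].

Lemma sum_two (th : nat) (F : 'I_th -> nat) (i j : 'I_th) : i != j ->
  (\sum_x F x = F i + (F j + \sum_(x | (x != i) && (x != j)) F x))%N.
Proof.
move=> ij; rewrite (bigD1 i) //; congr (_ + _)%N.
by rewrite (bigD1 j) //= eq_sym.
Qed.

Lemma sortf_nonincr th n (k : {ffun 'I_th -> 'I_n.+1}) : nonincr (sortf k).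
Proof.
rewrite /sortf /sigst; case: arg_minnP => // s _ H.
apply/forallP => i; apply/forallP => j; apply/implyP => ij.
rewrite !ffunE; rewrite leqNgt; apply/negP => lt.
have nij : i != j by apply/eqP => E; move: lt; rewrite E ltnn.
have ij' : (i < j)%N by rewrite ltn_neqAle nij ij.
have := H (tperm i j * s)%g isT.
rewrite /Phis (sum_two _ nij) (sum_two (fun x => x * k ((tperm i j * s)%g x))%N nij).
rewrite !permM tpermL tpermR.
have -> : (\sum_(x | (x != i) && (x != j)) x * k ((tperm i j * s)%g x) =
           \sum_(x | (x != i) && (x != j)) x * k (s x))%N.
  by apply: eq_bigr => x /andP [xi xj]; rewrite permM tpermD // eq_sym.
set a := (k (s i) : nat); set b := (k (s j) : nat).
set Rm := (\sum_(_ | _) _)%N.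
move: lt; rewrite -/a -/b => lt.
have ij2 : (i < j)%N := ij'.
clearbody a b Rm; move: (nat_of_ord i) (nat_of_ord j) ij2 => I J h.
nia.
Qed.

Lemma Kset_sortf th n (k : {ffun 'I_th -> 'I_n.+1}) : k \in Kset (sortf k).
Proof.
rewrite inE; apply/existsP; exists (sigst k)^-1%g; apply/forallP => i.
by rewrite ffunE permKV.
Qed.

Lemma sortf_comp th n (k : {ffun 'I_th -> 'I_n.+1}) :
  is_composition k -> is_composition (sortf k).
Proof.
rewrite /is_composition => /eqP E; apply/eqP; rewrite -[RHS]E.
rewrite [RHS](reindex_inj (@perm_inj _ (sigst k))) /=.
by apply: eq_bigr => i _; rewrite ffunE.
Qed.

Lemma nonincr_key th n (l : {ffun 'I_th -> 'I_n.+1}) (v : nat) (i : 'I_th) :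
  nonincr l -> (v <= l i)%N = (i < #|[set j | (v <= l j)%N]|)%N.
Proof.
move=> /forallP H.
have Hl (a b : 'I_th) : (a <= b)%N -> (l b <= l a)%N by move=> ab; have := H a; move/forallP/(_ b)/implyP; apply.
case: (leqP v (l i)) => vi; apply/esym.
  have le : (#|[set j : 'I_th | (0 <= j)%N && (j < i.+1)%N]| <= #|[set j | (v <= l j)%N]|)%N.
    apply: subset_leq_card; apply/fintype.subsetP => j; rewrite !inE ltnS => /andP [_ ji].
    exact: leq_trans vi (Hl _ _ ji).
  by rewrite card_interval // in le; rewrite subn0 in le.
have le : (#|[set j | (v <= l j)%N]| <= #|[set j : 'I_th | (0 <= j)%N && (j < i)%N]|)%N.
  apply: subset_leq_card; apply/fintype.subsetP => j; rewrite !inE => vj.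
  rewrite ltnNge; apply/negP => ij.
  by have := leq_trans vj (Hl _ _ ij); rewrite leqNgt vi.
rewrite card_interval ?subn0 // ?(ltnW (ltn_ord i)) // in le.
by apply/negbTE; rewrite -leqNgt.
Qed.

Lemma nonincr_perm th n (l1 l2 : {ffun 'I_th -> 'I_n.+1}) (t : {perm 'I_th}) :
  nonincr l1 -> nonincr l2 -> (forall i, l1 i = l2 (t i)) -> l1 = l2.
Proof.
move=> n1 n2 E.
have C v : #|[set j | (v <= l1 j)%N]| = #|[set j | (v <= l2 j)%N]|.
  rewrite -(card_imset _ (@perm_inj _ t)); apply: eq_card => j.
  rewrite inE; apply/imsetP/idP.
    by move=> [x xA ->]; move: xA; rewrite inE E.
  by move=> vj; exists (t^-1%g j); rewrite ?inE ?E ?permKV.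
apply/ffunP => i; apply/val_inj/eqP; rewrite eqn_leq.
by rewrite (nonincr_key _ _ n1) C -(nonincr_key _ _ n2) leqnn
           (nonincr_key _ _ n2) -C -(nonincr_key _ _ n1) leqnn.
Qed.

Lemma Kset_unique th n (l k : {ffun 'I_th -> 'I_n.+1}) :
  nonincr l -> k \in Kset l -> sortf k = l.
Proof.
move=> nl; rewrite inE => /existsP [s /forallP Hs].
apply: (@nonincr_perm _ _ _ _ (sigst k * s)%g) => //; first exact: sortf_nonincr.
by move=> i; rewrite ffunE permM (eqP (Hs _)).
Qed.
Lemma card_sum (T : finType) (P : pred T) :
  #|[set x | P x]| = (\sum_x (P x : nat))%N.
Proof.
rewrite -sum1_card big_mkcond; apply: eq_bigr => x _; rewrite inE.
by case: (P x).
Qed.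

Definition Ncol th n (k : 'I_th -> nat) : nat :=
  #|[set c : {ffun 'I_n -> 'I_th} | [forall i, cnt c i == k i]]|.

Definition hcons th n (xg : 'I_th * {ffun 'I_n -> 'I_th}) : {ffun 'I_n.+1 -> 'I_th} :=
  [ffun k => if unlift ord0 k is Some j then xg.2 j else xg.1].

Lemma cnt_hcons th n x (g : {ffun 'I_n -> 'I_th}) i :
  cnt (hcons (x, g)) i = ((x == i) + cnt g i)%N.
Proof.
rewrite /cnt !card_sum big_ord_recl /hcons ffunE unlift_none /=.
congr (_ + _)%N; apply: eq_bigr => j _; by rewrite ffunE liftK.
Qed.

Lemma Ncol_S th n (k : 'I_th -> nat) :
  Ncol n.+1 k = (\sum_x (0 < k x) * Ncol n (fun i => k i - (x == i)))%N.
Proof.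
rewrite /Ncol card_sum.
rewrite (reindex (@hcons th n)) /=; last first.
  exists (fun c : {ffun 'I_n.+1 -> 'I_th} => (c ord0, [ffun j => c (lift ord0 j)])).
    move=> [x g] _ /=; congr (_, _); first by rewrite /hcons ffunE unlift_none.
    by apply/ffunP => j; rewrite !ffunE liftK.
  move=> c _; apply/ffunP => j; rewrite /hcons ffunE /=.
  case: unliftP => [j' ->|->] //; by rewrite ffunE.
rewrite -(pair_big xpredT xpredT (fun x g => [forall i, cnt (hcons (x, g)) i == k i] : nat)) /=.
apply: eq_bigr => x _.
rewrite card_sum big_distrr /=; apply: eq_bigr => g _.
have -> : [forall i, cnt (hcons (x, g)) i == k i] =
          (0 < k x)%N && [forall i, cnt g i == k i - (x == i)]%N.
  apply/forallP/andP => [H|[kx /forallP H] i].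
    split; first by have := H x; rewrite cnt_hcons eqxx; move/eqP; lia.
    by apply/forallP => i; have := H i; rewrite cnt_hcons; move/eqP; case: (x == i) => /=; lia.
  rewrite cnt_hcons; have /eqP := H i.
  by case: (eqVneq x i) => [<-|ne] h; rewrite ?eqxx /= in h *; apply/eqP; lia.
by case: (0 < k x)%N; rewrite ?mul1n ?mul0n.
Qed.

Lemma count_colorings th n (k : 'I_th -> nat) :
  (\sum_i k i)%N = n -> (Ncol n k * \prod_i (k i)`!)%N = n`!.
Proof.
elim: n k => [|n IH] k sk.
  have k0 i : k i = 0%N.
    by move/eqP: sk; rewrite sum_nat_eq0 => /forallP/(_ i)/eqP.
  rewrite big1 ?muln1; last by move=> i _; rewrite k0.
  rewrite /Ncol (_ : [set c | _] = finset.setT) ?cardsT ?card_ffun ?card_ord //.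
  apply/setP => c; rewrite !inE; apply/forallP => i.
  by rewrite /cnt card_sum big_ord0 k0.
rewrite Ncol_S big_distrl /=.
rewrite (eq_bigr (fun x => k x * n`!)%N); last first.
  move=> x _; case kx: (k x) => [|m] /=; first by rewrite mul0n.
  pose k' i := (k i - (x == i))%N.
  have sk' : (\sum_i k' i)%N = n.
    have e1 := sk; rewrite (bigD1 x) //= kx in e1.
    rewrite (bigD1 x) //= /k' eqxx kx subn1 /=.
    rewrite (eq_bigr k); first by lia.
    by move=> i /negbTE; rewrite eq_sym => ->; rewrite subn0.
  rewrite mul1n -(IH k' sk') mulnCA; congr (_ * _)%N.
  rewrite (bigD1 x) //= kx factS [in RHS](bigD1 x) //= /k' eqxx kx subn1 /= mulnA.
  congr (_ * _)%N.
  apply: eq_bigr => i /negbTE; rewrite eq_sym => ->; by rewrite subn0.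
by rewrite -big_distrl /= sk factS mulnC.
Qed.
Lemma cnt_le n th (c : {ffun 'I_n -> 'I_th}) i : (cnt c i <= n)%N.
Proof. by rewrite /cnt -[X in (_ <= X)%N](card_ord n) max_card. Qed.

Definition cntf n th (c : {ffun 'I_n -> 'I_th}) : {ffun 'I_th -> 'I_n.+1} :=
  [ffun i => inord (cnt c i)].

Lemma cntfE n th (c : {ffun 'I_n -> 'I_th}) i : (cntf c i : nat) = cnt c i.
Proof. by rewrite ffunE inordK // ltnS cnt_le. Qed.

Lemma cntf_comp n th (c : {ffun 'I_n -> 'I_th}) : is_composition (cntf c).
Proof.
rewrite /is_composition (eq_bigr (fun i => cnt c i)); last by move=> i _; rewrite cntfE.
rewrite (eq_bigr (fun i => \sum_x (c x == i : nat)))%N; last by move=> i _; rewrite /cnt card_sum.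
rewrite exchange_big /= (eq_bigr (fun => 1%N)) ?sum1_card ?card_ord //.
move=> x _; rewrite (bigD1 (c x)) //= eqxx big1 // => i /negbTE.
by rewrite eq_sym => ->.
Qed.

Lemma P_W (R : realType) n th (p : 'I_th -> R) (c : {ffun 'I_n -> 'I_th}) :
  \prod_x p (c x) = \prod_(i < th) p i ^+ (cntf c i : nat).
Proof.
rewrite (partition_big (fun x => c x) xpredT) //=.
apply: eq_bigr => i _; rewrite cntfE /cnt.
rewrite (eq_bigr (fun => p i)); last by move=> x /eqP ->.
rewrite prodr_const; congr (_ ^+ _); apply: eq_card => x; by rewrite inE.
Qed.

Lemma Kset_comp th n (l k : {ffun 'I_th -> 'I_n.+1}) :
  is_composition l -> k \in Kset l -> is_composition k.
Proof.
rewrite /is_composition => /eqP E; rewrite inE => /existsP [s /forallP Hs].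
apply/eqP; rewrite -[RHS]E (eq_bigr (fun i => (l (s i) : nat))); last first.
  by move=> i _; rewrite (eqP (Hs i)).
by rewrite [RHS](reindex_inj (@perm_inj _ s)).
Qed.

Lemma Kset_prod th n (l k : {ffun 'I_th -> 'I_n.+1}) :
  k \in Kset l -> (\prod_i (k i : nat)`! = \prod_i (l i : nat)`!)%N.
Proof.
rewrite inE => /existsP [s /forallP Hs].
rewrite (eq_bigr (fun i => (l (s i) : nat)`!)); last first.
  by move=> i _; rewrite (eqP (Hs i)).
by rewrite [RHS](reindex_inj (@perm_inj _ s)).
Qed.

Lemma card_cntf n th (k : {ffun 'I_th -> 'I_n.+1}) :
  #|[set c : {ffun 'I_n -> 'I_th} | cntf c == k]| = Ncol n (fun i => (k i : nat)).
Proof.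
apply: eq_card => c; rewrite !inE; apply/eqP/forallP => [E i|H].
  by rewrite -cntfE E.
by apply/ffunP => i; apply/val_inj; rewrite /= cntfE (eqP (H i)).
Qed.

Lemma Ncol_multinom (R : realType) th n (l k : {ffun 'I_th -> 'I_n.+1}) :
  is_composition l -> k \in Kset l ->
  (Ncol n (fun i => (k i : nat)))%:R = multinom R l.
Proof.
move=> lc kK.
have kc := Kset_comp lc kK.
have := count_colorings (eqP kc); rewrite (Kset_prod kK) => E.
rewrite /multinom -E natrM mulfK //.
rewrite pnatr_eq0 -lt0n; apply: prodn_gt0 => i; exact: fact_gt0.
Qed.

Lemma Inv_Kset (R : realType) n th (j0 : 'I_th) (beta : R)
  (l : {ffun 'I_th -> 'I_n.+1}) (c : {ffun 'I_n -> 'I_th}) :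
  is_composition l -> cntf c \in Kset l ->
  \sum_(s | invc c s) fperm beta s = \sum_(s in young l) fperm beta s.
Proof.
move=> lc; rewrite inE => /existsP [t /forallP Ht].
pose c' := [ffun x => t (c x)].
have cc' : forall i, cnt c' i = cnt (dcol j0 l) i.
  move=> i; rewrite cnt_dcol //.
  have -> : cnt c' i = cnt c (t^-1%g i).
    rewrite /cnt; apply: eq_card => x; rewrite !inE ffunE.
    by rewrite -[in RHS](inj_eq (@perm_inj _ t)) permKV.
  by rewrite -cntfE (eqP (Ht _)) permKV.
have [pi Hpi] := same_cnt_perm cc'.
have -> : \sum_(s | invc c s) fperm beta s = \sum_(s | invc c' s) fperm beta s.
  apply: eq_bigl => s; apply: eq_forallb => x; rewrite !ffunE.
  by rewrite (inj_eq (@perm_inj _ t)).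
rewrite (@Inv_transfer R n th (fperm beta) c' (dcol j0 l) pi (fun s t => fpermJ beta s t) Hpi).
by apply: eq_bigl => s; rewrite (young_inv j0).
Qed.

Unset Implicit Arguments.

Theorem lemma2p1 (R : realType) (theta n : nat) (beta : R)
    (p : 'I_theta -> R) :
  (2 <= theta)%N -> 0 < beta ->
  (forall i, 0 <= p i) -> \sum_(i < theta) p i = 1 ->
  Eperm beta (fun s : {perm 'I_n} =>
                \prod_(g in porbits s) \sum_(i < theta) p i ^+ #|g|)
  = \sum_(l : {ffun 'I_theta -> 'I_n.+1} | is_partition l)
      multinom R l
      * (\sum_(k in Kset l) \prod_(i < theta) p i ^+ (k i : nat))
      * \sum_(s in young l) fperm beta s.
Proof.
move=> th2 _ _ _.
have th0 : (0 < theta)%N by apply: leq_trans th2.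
pose j0 : 'I_theta := Ordinal th0.
rewrite /Eperm.
rewrite (eq_bigr (fun s => \sum_(c : {ffun 'I_n -> 'I_theta} | invc c s)
                            fperm beta s * \prod_x p (c x))); last first.
  by move=> s _; rewrite (orbit_expand j0) big_distrr.
rewrite (exchange_big_dep xpredT) //=.
rewrite (eq_bigr (fun c : {ffun 'I_n -> 'I_theta} => (\prod_x p (c x)) * \sum_(s | invc c s) fperm beta s));
  last first.
  by move=> c _; rewrite mulr_sumr; apply: eq_bigr => s _; rewrite mulrC.
rewrite (partition_big (fun c : {ffun 'I_n -> 'I_theta} => sortf (cntf c)) (fun l => is_partition l)) /=;
  last first.
  by move=> c _; rewrite /is_partition sortf_comp ?cntf_comp //=; exact: sortf_nonincr.
apply: eq_bigr => l lP.
have lc : is_composition l by case/andP: lP.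
have ln : nonincr l by case/andP: lP.
rewrite (eq_bigl (fun c : {ffun 'I_n -> 'I_theta} => cntf c \in Kset l)); last first.
  move=> c; apply/eqP/idP => [<-|H]; first exact: Kset_sortf.
  exact: Kset_unique.
rewrite (eq_bigr (fun c : {ffun 'I_n -> 'I_theta} => (\prod_x p (c x)) * \sum_(s in young l) fperm beta s));
  last by move=> c H; rewrite (Inv_Kset j0 beta lc H).
rewrite -mulr_suml; congr (_ * _).
rewrite (partition_big (fun c : {ffun 'I_n -> 'I_theta} => cntf c) (fun k => k \in Kset l)) //= mulr_sumr.
apply: eq_bigr => k kK.
rewrite (eq_bigl (fun c : {ffun 'I_n -> 'I_theta} => c \in [set c : {ffun 'I_n -> 'I_theta} | cntf c == k])); last first.
  move=> c; rewrite [in RHS]inE.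
  by case: (eqVneq (cntf c) k) => [->|ne]; rewrite ?kK ?andbF ?andbT.
rewrite (eq_bigr (fun c : {ffun 'I_n -> 'I_theta} => \prod_(i < theta) p i ^+ (k i : nat))); last first.
  by move=> c; rewrite inE => /eqP <-; rewrite P_W.
by rewrite sumr_const card_cntf -(Ncol_multinom R lc kK) mulr_natl.
Qed.
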